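(* Let $m\ge1$ and $B_{m,p}=\frac{1}{p+2}\binom{2p+2}{p+1}m^{p+1}$. Then $$\mathbf N^{\mathcal B}_m(z)=\frac{1}{2mz^2}\sum_{p\ge0}B_{m,p}\left(\sqrt{1-4mz+4mz^{p+2}}-\sqrt{1-4mz}\right)$$ and $$\mathbf E^{\mathcal B}_m(z)=\frac{3}{2mz^2}\sum_{p\ge1}\frac{p}{2p+1}B_{m,p}\left(\sqrt{1-4mz+4mz^{p+2}}-\sqrt{1-4mz}\right).$$
   Context: An $m$-labeled binary tree is a non-empty finite rooted tree with node labels in $\{1,\dots,m\}$ in which every node has an optional left and an optional right child (distinguished); its size is its number of edges; $\mathcal B_{m,n}$ is the set of such trees of size $n$ (so $|\mathcal B_{m,p}|=B_{m,p}$). For such a tree $t$, its minimal dag has as nodes the distinct subtrees of $t$ (subtree = a node with all its descendants) and an edge from the node of a subtree to the node of each of its non-empty left/right subtrees; $\|\mathrm{dag}(t)\|$ is the number of distinct subtrees of $t$ and $|\mathrm{dag}(t)|$ is the sum over distinct subtrees of $t$ of the number of children of their root. Define $\mathbf N^{\mathcal B}_m(z)=\sum_{n\ge0}\big(\sum_{t\in\mathcal B_{m,n}}\|\mathrm{dag}(t)\|\big)z^n$ and $\mathbf E^{\mathcal B}_m(z)=\sum_{n\ge0}\big(\sum_{t\in\mathcal B_{m,n}}|\mathrm{dag}(t)|\big)z^n$. *)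

(* Defs.v *)
From HB Require Import structures.
From mathcomp Require Import all_boot all_order all_algebra.
Set Implicit Arguments. Unset Strict Implicit. Unset Printing Implicit Defensive.
Import Order.TTheory GRing.Theory Num.Theory.

(* Binary trees: [BLeaf] is the empty tree (absent child); an m-labeled binary
   tree is a tree [BNode a l r] (non-empty) all of whose labels lie in {1..m}. *)
Inductive bt := BLeaf | BNode of nat & bt & bt.

Lemma bt_eq_dec : forall x y : bt, {x = y} + {x <> y}.
Proof. decide equality; exact: (fun a b : nat => decP (@eqP _ a b)). Qed.

HB.instance Definition _ := comparableMixin bt_eq_dec.

Fixpoint labels_ok (m : nat) (t : bt) : bool :=
  match t with
  | BLeaf => true
  | BNode a l r => [&& 1 <= a <= m, labels_ok m l & labels_ok m r]
  end.

Definition is_mtree (m : nat) (t : bt) : bool := (t != BLeaf) && labels_ok m t.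

Fixpoint nnodes (t : bt) : nat :=
  match t with BLeaf => 0 | BNode _ l r => (nnodes l + nnodes r).+1 end.

(* size = number of edges = number of nodes - 1 (for non-empty trees) *)
Definition bsize (t : bt) : nat := (nnodes t).-1.

Fixpoint subtrees (t : bt) : seq bt :=
  match t with BLeaf => [::] | BNode _ l r => t :: (subtrees l ++ subtrees r) end.

Definition nchildren (t : bt) : nat :=
  match t with BLeaf => 0 | BNode _ l r => (l != BLeaf) + (r != BLeaf) end.

Definition dag_nodes (t : bt) : nat := size (undup (subtrees t)).
Definition dag_edges (t : bt) : nat := \sum_(u <- undup (subtrees t)) nchildren u.

Local Open Scope ring_scope.

Definition fps := nat -> rat.
Definition fmul (f g : fps) : fps := fun n => \sum_(i < n.+1) f i * g (n - i)%N.

(* coefficients of 1 - 4 m z + 4 m z^(p+2) *)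
Definition Qp (m p : nat) : fps := fun k =>
  (k == 0)%:R - 4 * m%:R * (k == 1)%:R + 4 * m%:R * (k == p.+2)%:R.
(* coefficients of 1 - 4 m z *)
Definition Q0 (m : nat) : fps := fun k => (k == 0)%:R - 4 * m%:R * (k == 1)%:R.

Definition Bmp (m p : nat) : rat :=
  'C(p.*2.+2, p.+1)%:R / p.+2%:R * m%:R ^+ p.+1.

(* Main.v *)
Require Import Defs.
From HB Require Import structures.
From mathcomp Require Import all_boot all_order all_algebra.
From mathcomp Require Import ring lra zify.
Set Implicit Arguments. Unset Strict Implicit. Unset Printing Implicit Defensive.
Import Order.TTheory GRing.Theory Num.Theory.
Local Open Scope ring_scope.

Fixpoint height (t : bt) : nat :=
  match t with BLeaf => 0 | BNode _ l r => (maxn (height l) (height r)).+1 end.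

Lemma height_le t : (height t <= nnodes t)%N.
Proof.
elim: t => //= a l IHl r IHr; rewrite ltnS geq_max.
by rewrite (leq_trans IHl) ?(leq_trans IHr) ?leq_addl ?leq_addr.
Qed.

Lemma node_neq_leaf a l r : (BNode a l r == BLeaf) = false.
Proof. by apply/eqP. Qed.

Lemma leaf_eq : (BLeaf == BLeaf) = true.
Proof. by apply/eqP. Qed.

Fixpoint all_t (m d : nat) : seq bt :=
  match d with
  | 0 => [:: BLeaf]
  | d'.+1 => BLeaf :: [seq BNode a lr.1 lr.2 | a <- iota 1 m,
                lr <- [seq (l, r) | l <- all_t m d', r <- all_t m d']]
  end.

Lemma mem_all_t m d t : (t \in all_t m d) = labels_ok m t && (height t <= d)%N.
Proof.
elim: d t => [|d IH] [|a l r].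
- by rewrite /= in_cons eqxx.
- by rewrite /= in_cons node_neq_leaf in_nil ltn0 andbF.
- by rewrite /= in_cons eqxx.
rewrite in_cons node_neq_leaf /= ltnS geq_max.
apply/allpairsP/idP.
  case=> [[a' [l' r']]] /= [Ha Hlr [-> -> ->]].
  move: Hlr => /allpairsP [[l2 r2]] /= [Hl Hr [-> ->]].
  move: Ha; rewrite mem_iota => /andP [Ha1 Ha2].
  rewrite IH in Hl; rewrite IH in Hr.
  case/andP: Hl => -> ->; case/andP: Hr => -> ->.
  by rewrite Ha1 /= !andbT -ltnS -add1n.
case/and3P => /and3P [/andP [Ha1 Ha2] Hl Hr] Hhl Hhr.
exists (a, (l, r)); split => //=.
  by rewrite mem_iota Ha1 add1n ltnS.
apply/allpairsP; exists (l, r); split => //=; by rewrite -/(all_t m d) IH ?Hl ?Hr.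
Qed.

Lemma uniq_all_t m d : uniq (all_t m d).
Proof.
elim: d => [|d IH] //=.
apply/andP; split.
  by apply/negP => /allpairsP [[x y]] [_ _].
apply: allpairs_uniq; first exact: iota_uniq.
  apply: allpairs_uniq => //.
  by move=> [x1 y1] [x2 y2] _ _ /= [-> ->].
by move=> [a1 [l1 r1]] [a2 [l2 r2]] _ _ /= [-> -> ->].
Qed.
Lemma sum_dec m (F : bt -> rat) d k :
  \sum_(t <- all_t m d.+1 | nnodes t == k.+1) F t =
  \sum_(a <- iota 1 m) \sum_(l <- all_t m d) \sum_(r <- all_t m d)
     ((nnodes l + nnodes r)%N == k)%:R * F (BNode a l r).
Proof.
rewrite /= big_cons /= big_mkcond big_allpairs_dep.
apply: eq_bigr => a _; rewrite big_allpairs_dep.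
apply: eq_bigr => l _; apply: eq_bigr => r _ /=.
by rewrite eqSS; case: (_ == _); rewrite ?mul1r ?mul0r.
Qed.

Lemma sum_perm (s1 s2 : seq bt) (P : pred bt) (F : bt -> rat) :
  uniq s1 -> uniq s2 -> (forall t, P t -> (t \in s1) = (t \in s2)) ->
  \sum_(t <- s1 | P t) F t = \sum_(t <- s2 | P t) F t.
Proof.
move=> u1 u2 H; rewrite -!(big_filter _ P); apply: perm_big.
apply: uniq_perm; rewrite ?filter_uniq // => t; rewrite !mem_filter.
by case Pt: (P t) => //=; rewrite H.
Qed.

Lemma sum_inv m (F : bt -> rat) d1 d2 k : (k <= d1)%N -> (k <= d2)%N ->
  \sum_(t <- all_t m d1 | nnodes t == k) F t =
  \sum_(t <- all_t m d2 | nnodes t == k) F t.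
Proof.
move=> h1 h2; apply: sum_perm; rewrite ?uniq_all_t // => t /eqP Ht.
rewrite !mem_all_t (leq_trans (height_le t)) ?Ht //.
by rewrite (leq_trans (height_le t)) ?Ht.
Qed.

Lemma sum_eq1 (s : seq bt) u : uniq s ->
  \sum_(t <- s) (t == u)%:R = (u \in s)%:R :> rat.
Proof.
elim: s => [|x s IH]; first by rewrite big_nil.
rewrite big_cons in_cons /= => /andP [xs us]; rewrite IH //.
case: (eqVneq x u) => [<-|nxu]; first by rewrite (negbTE xs) addr0.
by rewrite add0r.
Qed.

Lemma sum_pick k (x : nat) (h : nat -> rat) :
  \sum_(i < k.+1) (x == i)%:R * h i = (x <= k)%:R * h x.
Proof.
elim: k => [|k IH]; first by rewrite big_ord1; case: x => [|x]; rewrite ?mul0r.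
rewrite big_ord_recr /= IH.
case: (ltngtP x k.+1) => [xk|xk|->].
- by rewrite -ltnS xk mul0r addr0.
- by rewrite leqNgt (ltnW xk) /= !mul0r addr0.
- by rewrite ltnn mul0r add0r.
Qed.

Lemma sum_split (L : seq bt) (f g : bt -> rat) k :
  \sum_(l <- L) \sum_(r <- L) ((nnodes l + nnodes r)%N == k)%:R * (f l * g r) =
  \sum_(i < k.+1) (\sum_(l <- L | nnodes l == i) f l) *
                  (\sum_(r <- L | nnodes r == (k - i)%N) g r).
Proof.
symmetry.
under eq_bigr => i _ do rewrite big_mkcond mulr_suml.
under eq_bigr => i _ do under eq_bigr => l _ do rewrite big_mkcond mulr_sumr.
rewrite exchange_big /=; apply: eq_bigr => l _.
rewrite exchange_big /=; apply: eq_bigr => r _.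
transitivity (\sum_(i < k.+1) ((nnodes l == i)%:R *
   ((nnodes r == (k - i)%N)%:R * (f l * g r)))).
  apply: eq_bigr => i _; case: (nnodes l == i); case: (nnodes r == (k - i)%N);
  by rewrite ?mul1r ?mul0r ?mulr0.
rewrite (sum_pick k (nnodes l) (fun j => (nnodes r == (k - j)%N)%:R * (f l * g r))).
case: (leqP (nnodes l) k) => H.
  by rewrite mul1r -(eqn_add2l (nnodes l)) subnKC.
rewrite mul0r; apply/esym/eqP; rewrite mulf_eq0 pnatr_eq0 eqb0; apply/orP; left.
by rewrite neq_ltn (leq_trans H) ?orbT // leq_addr.
Qed.
Lemma sub_nn u t : u \in subtrees t -> (0 < nnodes u <= nnodes t)%N.
Proof.
elim: t => [|a l IHl r IHr] //=; rewrite in_cons mem_cat => /orP [/eqP ->|/orP [H|H]].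
- by rewrite /= leqnn.
- case/andP: (IHl H) => -> /= H1; apply: (leq_trans H1).
  by apply: leqW; apply: leq_addr.
- case/andP: (IHr H) => -> /= H1; apply: (leq_trans H1).
  by apply: leqW; apply: leq_addl.
Qed.

Lemma sub_lab m u t : u \in subtrees t -> labels_ok m t -> labels_ok m u.
Proof.
elim: t => [|a l IHl r IHr] //=; rewrite in_cons mem_cat => /orP [/eqP ->|/orP [H|H]] //.
- by case/and3P => _ Hl _; apply: IHl.
- by case/and3P => _ _ Hr; apply: IHr.
Qed.

Lemma self_notin_l a l r : BNode a l r \notin subtrees l.
Proof.
apply/negP => /sub_nn /andP [_] /=; rewrite ltnNge => /negP; apply.
by rewrite leq_addr.
Qed.

Lemma self_notin_r a l r : BNode a l r \notin subtrees r.
Proof.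
apply/negP => /sub_nn /andP [_] /=; rewrite ltnNge => /negP; apply.
by rewrite leq_addl.
Qed.

Lemma leaf_notin t : BLeaf \notin subtrees t.
Proof. by apply/negP => /sub_nn. Qed.

Definition Acnt m u k : rat :=
  \sum_(t <- all_t m k | nnodes t == k) (u \notin subtrees t)%:R.

Lemma Acnt0 m u : Acnt m u 0 = 1.
Proof. by rewrite /Acnt /= big_cons big_nil /= addr0. Qed.

Lemma sum_iota_const (c : rat) s n : \sum_(a <- iota s n) c = c *+ n.
Proof. by elim: n s => [|n IH] s; rewrite ?big_nil //= big_cons IH mulrS. Qed.

Lemma Arec m u k : labels_ok m u ->
  Acnt m u k.+1 = m%:R * \sum_(i < k.+1) Acnt m u i * Acnt m u (k - i)%N
                  - (nnodes u == k.+1)%:R.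
Proof.
move=> Hu; rewrite /Acnt.
pose H t := match t with BLeaf => 0
   | BNode _ l r => (u \notin subtrees l)%:R * (u \notin subtrees r)%:R end : rat.
transitivity (\sum_(t <- all_t m k.+1 | nnodes t == k.+1) (H t - (t == u)%:R)).
  apply: eq_bigr => [[|a l r]] //= _.
  rewrite in_cons mem_cat.
  case: (eqVneq (BNode a l r) u) => [<-|ne].
    by rewrite self_notin_l self_notin_r /= mul1r subrr.
  by case: (u \in subtrees l); case: (u \in subtrees r); rewrite /= ?mul1r ?mul0r ?subr0.
rewrite sumrB; congr (_ - _); last first.
  rewrite -big_filter sum_eq1 ?filter_uniq ?uniq_all_t // mem_filter mem_all_t Hu.
  case: eqP => //= Hn; by rewrite (leq_trans (height_le u)) ?Hn.
rewrite sum_dec.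
under eq_bigr => a _ do rewrite (@sum_split _ (fun l => (u \notin subtrees l)%:R)
   (fun l => (u \notin subtrees l)%:R)).
rewrite sum_iota_const mulr_natl; congr (_ *+ _); apply: eq_bigr => i _.
rewrite (@sum_inv m _ k i i) ?(ltn_ord i) //; last by rewrite -ltnS.
by rewrite (@sum_inv m _ k (k - i)%N (k - i)%N) ?leq_subr.
Qed.
Lemma fmul_split (f : fps) k :
  fmul f f k.+1 = 2 * f 0%N * f k.+1 + \sum_(i < k) f i.+1 * f (k - i)%N.
Proof.
rewrite /fmul big_ord_recl big_ord_recr /= subn0 subnn.
under eq_bigr => i _ do rewrite /bump /= add1n subSS.
rewrite (mulrC (f k.+1)); ring.
Qed.

Lemma sqrt_uniq (f g : fps) : f 0%N = 1 -> g 0%N = 1 ->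
  (forall k, fmul f f k = fmul g g k) -> forall k, f k = g k.
Proof.
move=> f0 g0 H k.
elim: k {-2}k (leqnn k) => [|k IH] j.
  by rewrite leqn0 => /eqP ->; rewrite f0 g0.
rewrite leq_eqVlt => /orP [/eqP ->|]; last by rewrite ltnS; apply: IH.
have E : \sum_(i < k) f i.+1 * f (k - i)%N = \sum_(i < k) g i.+1 * g (k - i)%N.
  apply: eq_bigr => i _; rewrite !IH ?leq_subr //.
move: (H k.+1); rewrite !fmul_split E f0 g0 => h; lra.
Qed.

Definition tA m u (k : nat) : rat :=
  if k is k'.+1 then -(2 * m%:R) * Acnt m u k' else 1.

Lemma tA_S m u k : tA m u k.+1 = -(2 * m%:R) * Acnt m u k.
Proof. by []. Qed.

Lemma tA_0 m u : tA m u 0 = 1.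
Proof. by []. Qed.

Lemma tA_sq0 m u : fmul (tA m u) (tA m u) 0 = 1.
Proof. by rewrite /fmul big_ord1 /= mulr1. Qed.

Lemma tA_sq1 m u : fmul (tA m u) (tA m u) 1 = - (4 * m%:R).
Proof. rewrite fmul_split big_ord0 tA_S tA_0 Acnt0; lra. Qed.

Lemma tA_sq2 m u j : labels_ok m u ->
  fmul (tA m u) (tA m u) j.+2 = 4 * m%:R * (nnodes u == j.+1)%:R.
Proof.
move=> Hu; rewrite fmul_split.
have E : forall i : 'I_j.+1, tA m u i.+1 * tA m u (j.+1 - i)%N =
   4 * m%:R ^+ 2 * (Acnt m u i * Acnt m u (j - i)%N).
  move=> i; rewrite subSn; last by rewrite -ltnS. rewrite !tA_S; move: (Acnt m u i) (Acnt m u (j - i)) (m%:R : rat) => x y M; ring.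
under eq_bigr => i _ do rewrite E.
rewrite -mulr_sumr tA_0 tA_S Arec //; ring.
Qed.

Lemma tA_eq m (hm : (1 <= m)%N) u p (Sp : fps) : labels_ok m u -> nnodes u = p.+1 ->
  Sp 0%N = 1 -> (forall k, fmul Sp Sp k = Qp m p k) -> forall k, Sp k = tA m u k.
Proof.
move=> Hu Hn S0 HS; apply: sqrt_uniq => // -[|[|j]]; rewrite HS.
- by rewrite tA_sq0 /Qp /=; ring.
- by rewrite tA_sq1 /Qp /=; ring.
rewrite tA_sq2 // /Qp /= Hn eqSS eq_sym; ring.
Qed.

Lemma tB_eq m (hm : (1 <= m)%N) (T : fps) :
  T 0%N = 1 -> (forall k, fmul T T k = Q0 m k) -> forall k, T k = tA m BLeaf k.
Proof.
move=> T0 HT; apply: sqrt_uniq => // -[|[|j]]; rewrite HT.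
- by rewrite tA_sq0 /Q0 /=; ring.
- by rewrite tA_sq1 /Q0 /=; ring.
rewrite tA_sq2 // /Q0 /=; ring.
Qed.
Definition lowzero (n : nat) (p : {poly rat}) := forall j, (j < n)%N -> p`_j = 0.

Lemma lz_add n p q : lowzero n p -> lowzero n q -> lowzero n (p + q).
Proof. by move=> hp hq j hj; rewrite coefD hp ?hq ?addr0. Qed.

Lemma lz_opp n p : lowzero n p -> lowzero n (- p).
Proof. by move=> hp j hj; rewrite coefN hp ?oppr0. Qed.

Lemma lz_muln n p k : lowzero n p -> lowzero n (p *+ k).
Proof. by move=> hp j hj; rewrite coefMn hp ?mul0rn. Qed.

Lemma lz_mulr n p q : lowzero n p -> lowzero n (p * q).
Proof.
move=> hp j hj; rewrite coefM big1 // => i _; rewrite hp ?mul0r //.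
by apply: leq_ltn_trans hj; rewrite -ltnS.
Qed.

Lemma lz_mull n p q : lowzero n q -> lowzero n (p * q).
Proof. by rewrite mulrC; apply: lz_mulr. Qed.

Lemma lz_X n p : lowzero n p -> lowzero n.+1 ('X * p).
Proof. by move=> hp [|j] hj; rewrite coefXM //= hp. Qed.

Lemma lz_deriv n p : lowzero n.+1 p -> lowzero n p^`().
Proof. by move=> hp j hj; rewrite coef_deriv hp ?mul0rn. Qed.

Lemma cat_rec (b : nat -> rat) (M : rat) : M != 0 -> b 0%N = 1 ->
  (forall k, b k.+1 = M * \sum_(i < k.+1) b i * b (k - i)%N) ->
  forall k, (k.+2)%:R * b k.+1 = 2 * (k.*2.+1)%:R * M * b k.
Proof.
move=> M0 b0 brec k.
pose N := k.+3.
pose P : {poly rat} := \poly_(i < N) b i.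
pose c : {poly rat} := M%:P.
pose E := P - 1 - c * ('X * (P * P)).
pose Tp := 1 - (c * ('X * P)) *+ 2.
pose Q := 1 - (c * 'X) *+ 4.
have PC j : (j < N)%N -> P`_j = b j by move=> hj; rewrite coef_poly hj.
have lzE : lowzero N E.
  move=> [|j] hj; rewrite !coefB coef1 coefCM coefXM /=.
    by rewrite PC // b0 subrr mulr0 subr0.
  rewrite PC // brec coefM; apply/eqP; rewrite subr0 subr_eq0; apply/eqP.
  congr (_ * _); apply: eq_bigr => i _; rewrite !PC //.
    by apply: leq_ltn_trans hj; rewrite ltnW // ltnS leq_subr.
  by apply: leq_ltn_trans hj; rewrite ltnW // ltn_ord.
have H1 : Tp * Tp = Q - ('X * (c * E)) *+ 4 by rewrite /Tp /Q /E; ring.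
pose G := ('X * (c * E))^`().
have Hd : Tp^`() * Tp + Tp * Tp^`() = Q^`() - G *+ 4.
  by rewrite -derivM H1 derivB derivMn.
have HQ : Q^`() = - (c *+ 4).
  rewrite /Q derivB derivMn derivM derivX mulr1 /c !derivC mul0r; ring.
have Z : (Q * Tp^`()) *+ 2 - Tp * Q^`() =
          - (Tp * G) *+ 4 + ('X * (c * E) * Tp^`()) *+ 8.
  apply/eqP; rewrite -subr_eq0; apply/eqP.
  have -> : (Q * Tp^`()) *+ 2 - Tp * Q^`() -
       (- (Tp * G) *+ 4 + ('X * (c * E) * Tp^`()) *+ 8) =
     Tp * ((Tp^`() * Tp + Tp * Tp^`()) - (Q^`() - G *+ 4))
     - Tp^`() *+ 2 * (Tp * Tp - (Q - ('X * (c * E)) *+ 4)).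
    by ring.
  by rewrite Hd H1 !subrr !mulr0 subrr.
have lzR : lowzero N (- (Tp * G) *+ 4 + ('X * (c * E) * Tp^`()) *+ 8).
  apply: lz_add; apply: lz_muln.
    by apply/lz_opp/lz_mull/lz_deriv/lz_X/lz_mull.
  apply: lz_mulr => j hj; apply: (@lz_X N _ (lz_mull _ lzE)).
  exact: ltnW.
have Hk : ((Q * Tp^`()) *+ 2 - Tp * Q^`())`_k.+1 = 0 by rewrite Z; apply: lzR.
have e1 : (Q * Tp^`()) *+ 2 - Tp * Q^`() =
   (Tp^`() - (c * ('X * Tp^`())) *+ 4) *+ 2 + (Tp * c) *+ 4.
  by rewrite HQ /Q; ring.
have TC j : (j < N)%N -> Tp`_j.+1 = -(2 * M) * b j.
  by move=> hj; rewrite /Tp coefB coef1 coefMn coefCM coefXM /= PC // sub0r -mulr_natr; ring.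
rewrite e1 coefD !coefMn coefB coefMn coefCM coefXM /= coefMC !coef_deriv in Hk.
have hk : (k < N)%N by rewrite /N ltnW // ltnW.
rewrite (TC k.+1) // (TC k) // in Hk.
have H0 : (- (4 * M)) * ((k.+2)%:R * b k.+1 - 2 * (k.*2.+1)%:R * M * b k) = 0.
  by rewrite -Hk -muln2; ring.
move/eqP: H0; rewrite mulf_eq0 oppr_eq0 mulf_eq0 (negbTE M0) orbF subr_eq0.
by case/orP => /eqP // ->.
Qed.
Definition Bcnt m k := Acnt m BLeaf k.

Lemma Bcnt_rec m k :
  Bcnt m k.+1 = m%:R * \sum_(i < k.+1) Bcnt m i * Bcnt m (k - i)%N.
Proof. by rewrite /Bcnt Arec // subr0. Qed.

Lemma Bcnt_ratio m (hm : (1 <= m)%N) k :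
  (k.+2)%:R * Bcnt m k.+1 = 2 * (k.*2.+1)%:R * m%:R * Bcnt m k.
Proof.
apply: cat_rec; first by rewrite pnatr_eq0 -lt0n.
  exact: Acnt0.
exact: Bcnt_rec.
Qed.

Lemma bin_ratio p : ('C(p.*2.+4, p.+2) * p.+2 = 2 * p.*2.+3 * 'C(p.*2.+2, p.+1))%N.
Proof.
have e1 := mul_bin_diag p.*2.+4 p.+1.
have e2 := mul_bin_down p.*2.+3 p.+1.
have e4 : (p.*2.+3 - p.+1 = p.+2)%N by rewrite -addnn; lia.
rewrite e4 in e2; move: e1 => /= e1.
have e3 : 'C(p.*2.+4, p.+2) = (2 * 'C(p.*2.+3, p.+1))%N.
  apply/eqP; rewrite -(eqn_pmul2l (ltn0Sn p.+1)) -e1; apply/eqP.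
  rewrite -addnn; nia.
rewrite e3; move: e2 => /= e2; nia.
Qed.

Lemma lit_neq0 p : (2 + (p%:R : rat) != 0) && (3 + (p%:R : rat) != 0).
Proof.
have hp : (0 : rat) <= p%:R := ler0n _ p.
by apply/andP; split; apply/eqP => H; lra.
Qed.

Lemma Bmp_ratio m p :
  (p.+3)%:R * Bmp m p.+1 = 2 * (p.*2.+3)%:R * m%:R * Bmp m p.
Proof.
rewrite /Bmp.
have h := bin_ratio p.
have h' : ('C(p.*2.+4, p.+2))%:R * (p.+2)%:R =
     2 * (p.*2.+3)%:R * ('C(p.*2.+2, p.+1))%:R :> rat.
  by rewrite -natrM h !natrM.
have /= -> : ((p.+1).*2.+2 = p.*2.+4)%N by [].
set C1 := ('C(p.*2.+4, p.+2))%:R in h' *.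
set C0 := ('C(p.*2.+2, p.+1))%:R in h' *.
have n2 : (p.+2)%:R != 0 :> rat by rewrite pnatr_eq0.
have n3 : (p.+3)%:R != 0 :> rat by rewrite pnatr_eq0.
have -> : C1 = 2 * (p.*2.+3)%:R * C0 / (p.+2)%:R.
  by rewrite -h' mulfK.
rewrite exprS; field.
exact: lit_neq0.
Qed.

Lemma Bcnt_closed m (hm : (1 <= m)%N) p : Bcnt m p.+1 = Bmp m p.
Proof.
elim: p => [|p IH].
  by rewrite Bcnt_rec big_ord1 /Bcnt Acnt0 /Bmp /= expr1 bin1 mulr1 divff ?mul1r ?mulr1 // pnatr_eq0.
have n3 : (p.+3)%:R != 0 :> rat by rewrite pnatr_eq0.
apply: (mulfI n3); rewrite Bmp_ratio -IH.
exact: (Bcnt_ratio hm p.+1).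
Qed.
Lemma Bsum1 m d i : (i <= d)%N ->
  \sum_(t <- all_t m d | nnodes t == i) 1 = Bcnt m i.
Proof.
move=> hi; rewrite /Bcnt /Acnt (@sum_inv m _ d i i) //.
by apply: eq_bigr => t _; rewrite leaf_notin.
Qed.

Lemma Bsum_nl m d i : (i <= d)%N ->
  \sum_(t <- all_t m d | nnodes t == i) (t != BLeaf)%:R = (i != 0)%:R * Bcnt m i.
Proof.
move=> hi; rewrite -(@Bsum1 m d i) // mulr_sumr; apply: eq_bigr => t /eqP <-.
by case: t => [|a l r] //=; rewrite ?mul0r ?leaf_eq ?node_neq_leaf ?mulr1.
Qed.

Lemma nch_sum m k :
  \sum_(t <- all_t m k.+1 | nnodes t == k.+1) (nchildren t)%:R =
  2 * Bcnt m k.+1 - 2 * m%:R * Bcnt m k.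
Proof.
rewrite sum_dec.
have E : forall a l r, ((nnodes l + nnodes r)%N == k)%:R * (nchildren (BNode a l r))%:R
   = ((nnodes l + nnodes r)%N == k)%:R * ((l != BLeaf)%:R * 1)
   + ((nnodes l + nnodes r)%N == k)%:R * (1 * (r != BLeaf)%:R) :> rat.
  by move=> a l r; rewrite /= natrD mulr1 mul1r mulrDr.
under eq_bigr => a _ do under eq_bigr => l _ do under eq_bigr => r _ do rewrite E.
under eq_bigr => a _ do under eq_bigr => l _ do rewrite big_split.
under eq_bigr => a _ do rewrite big_split.
under eq_bigr => a _ do rewrite (@sum_split _ (fun l => (l != BLeaf)%:R) (fun _ => 1))
   (@sum_split _ (fun _ => 1) (fun l => (l != BLeaf)%:R)).
rewrite sum_iota_const.
have e1 : \sum_(i < k.+1) (\sum_(l <- all_t m k | nnodes l == i) (l != BLeaf)%:R) *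
     \sum_(r <- all_t m k | nnodes r == (k - i)%N) 1
     = \sum_(i < k.+1) Bcnt m i * Bcnt m (k - i)%N - Bcnt m k.
  rewrite big_ord_recl [X in _ = X - _]big_ord_recl /= subn0.
  rewrite Bsum_nl // Bsum1 // eqxx /= !mul0r add0r /Bcnt Acnt0 mul1r [RHS]addrC addKr.
  apply: eq_bigr => i _; rewrite /bump /= add1n.
  by rewrite Bsum_nl ?Bsum1 ?leq_subr ?ltn_ord //= mul1r.
have e2 : \sum_(i < k.+1) (\sum_(l <- all_t m k | nnodes l == i) 1) *
     \sum_(r <- all_t m k | nnodes r == (k - i)%N) (r != BLeaf)%:R
     = \sum_(i < k.+1) Bcnt m i * Bcnt m (k - i)%N - Bcnt m k.
  rewrite big_ord_recr [X in _ = X - _]big_ord_recr /= subnn.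
  rewrite Bsum_nl // Bsum1 // eqxx /= mul0r mulr0 addr0 /Bcnt Acnt0 mulr1 addrK.
  apply: eq_bigr => i _; rewrite Bsum_nl ?Bsum1 ?leq_subr ?subn_eq0 -?ltnNge ?ltn_ord //.
    by rewrite mul1r.
  by apply: ltnW.
rewrite e1 e2 Bcnt_rec /= -mulr_natl.
set Sg := \sum_(i < k.+1) _; ring.
Qed.
Lemma dag_sum m (F : bt -> nat) t D : labels_ok m t -> (nnodes t <= D)%N ->
  (\sum_(u <- undup (subtrees t)) F u)%:R =
  \sum_(u <- [seq u <- all_t m D | (0 < nnodes u <= D)%N])
      (u \in subtrees t)%:R * (F u)%:R :> rat.
Proof.
move=> Ht Hn; rewrite natr_sum.
rewrite [RHS](eq_bigr (fun u => if u \in subtrees t then (F u)%:R else 0)); last first.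
  by move=> u _; case: (u \in subtrees t); rewrite ?mul1r ?mul0r.
rewrite -big_mkcond -[RHS]big_filter.
apply: perm_big; apply: uniq_perm.
- exact: undup_uniq.
- by rewrite !filter_uniq ?uniq_all_t.
move=> u; rewrite mem_undup !mem_filter mem_all_t.
case Hu: (u \in subtrees t) => //=.
case/andP: (sub_nn Hu) => -> /= H1.
rewrite (leq_trans H1 Hn) (sub_lab Hu Ht) /=.
by rewrite (leq_trans (height_le u) (leq_trans H1 Hn)).
Qed.

Lemma sum_pick1 n (x : nat) (h : nat -> rat) :
  \sum_(p < n.+1) (x == p.+1)%:R * h p = (0 < x <= n.+1)%:R * h x.-1.
Proof.
case: x => [|x].
  by rewrite big1 ?mul0r // => i _; rewrite mul0r.
transitivity (\sum_(p < n.+1) (x == p)%:R * h p); first by apply: eq_bigr.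
by rewrite sum_pick.
Qed.

Lemma regroup (L : seq bt) n (h : nat -> rat) (G : bt -> rat) :
  \sum_(u <- L | (0 < nnodes u <= n.+1)%N) h (nnodes u).-1 * G u =
  \sum_(p < n.+1) h p * \sum_(u <- L | nnodes u == p.+1) G u.
Proof.
rewrite big_mkcond.
transitivity (\sum_(u <- L) \sum_(p < n.+1) (nnodes u == p.+1)%:R * (h p * G u)).
  apply: eq_bigr => u _.
  rewrite (sum_pick1 n (nnodes u) (fun p => h p * G u)).
  by case: (0 < nnodes u <= n.+1)%N; rewrite ?mul1r ?mul0r.
rewrite exchange_big /=; apply: eq_bigr => p _.
rewrite mulr_sumr [RHS]big_mkcond; apply: eq_bigr => u _.
by case: (nnodes u == p.+1); rewrite ?mul1r ?mul0r ?mulr0.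
Qed.

Lemma mem_s m n t : (is_mtree m t && (bsize t == n)) =
   (t \in [seq t <- all_t m n.+1 | nnodes t == n.+1]).
Proof.
rewrite mem_filter mem_all_t /is_mtree /bsize.
case: t => [|a l r]; first by rewrite leaf_eq.
rewrite node_neq_leaf /= eqSS.
case: eqP => [He|]; last by rewrite !andbF.
rewrite andbT /=; symmetry; apply/andP/idP => [[]|] //= H; split => //.
have := height_le (BNode a l r); rewrite /= He; apply.
Qed.
Unset Implicit Arguments.

Theorem theorem5 (m : nat) (hm : (1 <= m)%N) (S : nat -> fps) (T : fps) :
  (forall p, S p 0%N = 1) ->
  (forall p k, fmul (S p) (S p) k = Qp m p k) ->
  T 0%N = 1 ->
  (forall k, fmul T T k = Q0 m k) ->
  forall (n : nat) (s : seq bt),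
    uniq s ->
    (forall t, (t \in s) = is_mtree m t && (bsize t == n)) ->
    (\sum_(t <- s) (dag_nodes t)%:R
       = (2 * m%:R)^-1 * \sum_(p < n.+1) Bmp m p * (S p n.+2 - T n.+2))
    /\
    (\sum_(t <- s) (dag_edges t)%:R
       = 3 / (2 * m%:R) *
         \sum_(1 <= p < n.+1) p%:R / (p.*2.+1)%:R * Bmp m p * (S p n.+2 - T n.+2)).
Proof.
move=> S0 HS T0 HT n s us Hs.
have m0 : m%:R != 0 :> rat by rewrite pnatr_eq0 -lt0n.
have Hperm : forall F : bt -> rat, \sum_(t <- s) F t =
    \sum_(t <- all_t m n.+1 | nnodes t == n.+1) F t.
  move=> F; rewrite -[RHS]big_filter; apply: perm_big; apply: uniq_perm => //.
    by rewrite filter_uniq ?uniq_all_t.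
  by move=> t; rewrite Hs mem_s.
pose h p := (S p n.+2 - T n.+2) / (2 * m%:R).
have Hcont : forall u, labels_ok m u -> (0 < nnodes u)%N ->
    \sum_(t <- all_t m n.+1 | nnodes t == n.+1) (u \in subtrees t)%:R
    = h (nnodes u).-1.
  move=> u Hu Hn.
  have -> : \sum_(t <- all_t m n.+1 | nnodes t == n.+1) (u \in subtrees t)%:R
            = Bcnt m n.+1 - Acnt m u n.+1.
    rewrite /Bcnt /Acnt -sumrB; apply: eq_bigr => t _; rewrite leaf_notin.
    by case: (u \in subtrees t); rewrite /= ?subr0 ?subrr.
  rewrite /h (tA_eq hm Hu (esym (prednK Hn)) (S0 _) (HS _)) (tB_eq hm T0 HT) !tA_S.
  by rewrite /Bcnt; field.
have Hmain : forall F : bt -> nat,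
    \sum_(t <- s) (\sum_(u <- undup (subtrees t)) F u)%:R =
    \sum_(p < n.+1) h p * \sum_(u <- all_t m n.+1 | nnodes u == p.+1) (F u)%:R.
  move=> F; rewrite Hperm big_seq_cond.
  rewrite (eq_bigr (fun t => \sum_(u <- [seq u <- all_t m n.+1 | (0 < nnodes u <= n.+1)%N])
      (u \in subtrees t)%:R * (F u)%:R)); last first.
    move=> t /andP [Ht /eqP Hn]; rewrite mem_all_t in Ht.
    case/andP: Ht => Hl _.
    by apply: dag_sum => //; rewrite Hn.
  rewrite exchange_big big_filter.
  transitivity (\sum_(u <- all_t m n.+1 | (0 < nnodes u <= n.+1)%N)
                   h (nnodes u).-1 * (F u)%:R); last exact: regroup.
  rewrite big_seq_cond [RHS]big_seq_cond.
  apply: eq_bigr => u /andP [Hu Hn].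
  rewrite -mulr_suml.
  rewrite mem_all_t in Hu; case/andP: Hu => Hl _; case/andP: Hn => Hn _.
  rewrite -Hcont //; congr (_ * _).
  by rewrite [RHS]big_seq_cond.
split.
  rewrite /dag_nodes.
  under eq_bigr => t _ do rewrite -sum1_size.
  rewrite Hmain mulr_sumr; apply: eq_bigr => p _.
  rewrite (@Bsum1 m n.+1 p.+1) ?ltn_ord // Bcnt_closed // /h.
  by field.
rewrite /dag_edges Hmain.
have E : forall p : 'I_n.+1,
    h p * \sum_(u <- all_t m n.+1 | nnodes u == p.+1) (nchildren u)%:R =
    3 / (2 * m%:R) * (p%:R / (p.*2.+1)%:R * Bmp m p * (S p n.+2 - T n.+2)).
  move=> p.
  rewrite (@sum_inv m _ n.+1 p.+1 p.+1) ?ltn_ord // nch_sum.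
  have r := Bcnt_ratio hm p.
  rewrite Bcnt_closed // in r.
  have q0 : (p.*2.+1)%:R != 0 :> rat by rewrite pnatr_eq0.
  have e : 2 * m%:R * Bcnt m p = (p.+2)%:R * Bmp m p / (p.*2.+1)%:R.
    apply: (mulIf q0); rewrite mulfVK // r; ring.
  rewrite mulrA e Bcnt_closed // /h.
  have d1 : (p.*2.+1)%:R = 2 * p%:R + 1 :> rat.
    by rewrite -addn1 -muln2 natrD natrM mulrC.
  have d2 : (p.+2)%:R = p%:R + 2 :> rat by rewrite -addn2 natrD.
  rewrite d1 d2; rewrite d1 in q0.
  by field; rewrite q0 m0.
under eq_bigr => p _ do rewrite E.
rewrite -mulr_sumr; congr (_ * _).
rewrite big_ord_recl /= !mul0r add0r big_add1 big_mkord.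
by apply: eq_bigr => i _; rewrite /bump /= add1n.
Qed.
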